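(* Let $\Gamma\le\mathrm{Iso}(\mathbb{R}^{r,s})$ be a subgroup whose centralizer in $\mathrm{Iso}(\mathbb{R}^{r,s})$ has an open orbit in $\mathbb{R}^{r,s}$, let $\Delta$ be the center of $\Gamma$, and let $U_0=U_\Gamma\cap U_\Gamma^\perp$. Then $A\cdot U_\Delta^\perp\subseteq U_0$ for every $(I+A,v)\in\Gamma$.
   Context: $\mathbb{R}^{r,s}$ denotes $\mathbb{R}^{n}$, $n=r+s$, with a nondegenerate symmetric bilinear form $\langle\cdot,\cdot\rangle$ of signature $(r,s)$; $\mathrm{Iso}(\mathbb{R}^{r,s})$ is its group of affine isometries, whose elements are written $\gamma=(I+A,v)\colon x\mapsto(I+A)x+v$. For a subset $\Lambda$ of $\Gamma$, $U_\Lambda=\sum_{(I+A,v)\in\Lambda}\operatorname{im}A$; $\perp$ denotes orthogonal complement with respect to $\langle\cdot,\cdot\rangle$. Known facts (Wolf) for such $\Gamma$: every $(I+A,v)\in\Gamma$ satisfies $A^2=0$, $Av=0$, $\langle Ax,y\rangle=-\langle x,Ay\rangle$, $\ker A=(\operatorname{im}A)^\perp$, $\operatorname{im}A$ totally isotropic; for $\gamma_i=(I+A_i,v_i)\in\Gamma$ one has $A_1A_2A_3=0$ and $[\gamma_1,\gamma_2]=(I+2A_1A_2,2A_1v_2)$. *)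

(* Defs.v *)
From Stdlib Require Import Reals List.
From mathcomp Require Import all_boot.

Set Implicit Arguments.
Unset Strict Implicit.
Unset Printing Implicit Defensive.

Local Open Scope R_scope.

Definition vec (n : nat) := 'I_n -> R.

Definition vzero (n : nat) : vec n := fun _ => R0.
Definition vadd (n : nat) (x y : vec n) : vec n := fun i => (x i + y i).
Definition vopp (n : nat) (x : vec n) : vec n := fun i => (- x i).
Definition vscale (n : nat) (a : R) (x : vec n) : vec n := fun i => (a * x i).

(* The standard form of signature (r,s) on R^{r+s}:
   <x,y> = x_0 y_0 + ... + x_{r-1} y_{r-1} - x_r y_r - ... - x_{r+s-1} y_{r+s-1}. *)
Definition sgn (r n : nat) (i : 'I_n) : R := if leq (nat_of_ord i).+1 r then R1 else (- R1).

Definition form (r s : nat) (x y : vec (r + s)) : R :=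
  \big[Rplus/R0]_(i < r + s) (sgn r i * x i * y i).

Definition aff (n : nat) := ((vec n -> vec n) * vec n)%type.

Definition aff_app (n : nat) (g : aff n) (x : vec n) : vec n := vadd (g.1 x) g.2.

Definition aff_id (n : nat) : aff n := ((fun x => x), @vzero n).

Definition aff_comp (n : nat) (g h : aff n) : aff n :=
  (fun x => g.1 (h.1 x), vadd (g.1 h.2) g.2).

Definition is_linear (n : nat) (L : vec n -> vec n) : Prop :=
  (forall x y, L (vadd x y) = vadd (L x) (L y)) /\
  (forall a x, L (vscale a x) = vscale a (L x)).

Definition is_iso (r s : nat) (g : aff (r + s)) : Prop :=
  is_linear g.1 /\ (forall x y, form (g.1 x) (g.1 y) = form x y).

Definition is_subgroup_Iso (r s : nat) (G : aff (r + s) -> Prop) : Prop :=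
  (forall g, G g -> is_iso g) /\
  G (@aff_id (r + s)) /\
  (forall g h, G g -> G h -> G (aff_comp g h)) /\
  (forall g, G g -> exists h, G h /\ aff_comp g h = @aff_id (r + s)
                                  /\ aff_comp h g = @aff_id (r + s)).

Definition centralizer (r s : nat) (G : aff (r + s) -> Prop) : aff (r + s) -> Prop :=
  fun c => is_iso c /\ forall g, G g -> aff_comp c g = aff_comp g c.

Definition center (n : nat) (G : aff n -> Prop) : aff n -> Prop :=
  fun g => G g /\ forall h, G h -> aff_comp g h = aff_comp h g.

Definition orbit (n : nat) (C : aff n -> Prop) (x : vec n) : vec n -> Prop :=
  fun y => exists c, C c /\ aff_app c x = y.

Definition is_open (n : nat) (S : vec n -> Prop) : Prop :=
  forall x, S x -> exists eps : R, (0 < eps) /\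
    forall y : vec n, (forall i, (Rabs (y i - x i) < eps)) -> S y.

Definition has_open_orbit (n : nat) (C : aff n -> Prop) : Prop :=
  exists x, is_open (orbit C x).

(* For gamma = (I + A, v), A = L - I. *)
Definition Apart (n : nat) (g : aff n) : vec n -> vec n :=
  fun x => vadd (g.1 x) (vopp x).

(* U_Lambda = sum over gamma in Lambda of im A_gamma (finite sums). *)
Definition U_of (n : nat) (Lam : aff n -> Prop) : vec n -> Prop :=
  fun y => exists l : list (aff n * vec n),
    (forall p, List.In p l -> Lam p.1) /\
    y = List.fold_right (fun p acc => vadd (Apart p.1 p.2) acc) (@vzero n) l.

Definition perp (r s : nat) (U : vec (r + s) -> Prop) : vec (r + s) -> Prop :=
  fun y => forall u, U u -> form u y = R0.

Definition U0 (r s : nat) (G : aff (r + s) -> Prop) : vec (r + s) -> Prop :=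
  fun y => U_of G y /\ perp (U_of G) y.

(* Main.v *)
Set Warnings "-notation-overridden".
Set Implicit Arguments. Unset Strict Implicit. Unset Printing Implicit Defensive.
From HB Require Import structures.
Require Import Defs.
From Stdlib Require Import Reals List Lra FunctionalExtensionality.
From mathcomp Require Import all_boot.
Local Open Scope R_scope.

Lemma RplusA : associative Rplus. Proof. by move=> a b c; rewrite Rplus_assoc. Qed.
HB.instance Definition _ := Monoid.isComLaw.Build R R0 Rplus RplusA Rplus_comm Rplus_0_l.

Ltac veq := apply: functional_extensionality => ?; rewrite /vadd /vopp /vscale /vzero /=; ring.

Section F.
Variables r s : nat.
Notation n := (r + s)%nat.
Notation B := (@form r s).

Lemma form_sym (x y : vec n) : B x y = B y x.
Proof. rewrite /form; apply: eq_bigr => i _; ring. Qed.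

Lemma form_addl (x y z : vec n) : B (vadd x y) z = B x z + B y z.
Proof. rewrite /form -big_split; apply: eq_bigr => i _; rewrite /vadd /=; ring. Qed.

Lemma form_scalel a (x z : vec n) : B (vscale a x) z = a * B x z.
Proof.
rewrite /form; apply: (big_rec2 (fun u w => u = a * w)); first by ring.
move=> i u w _ ->; rewrite /vscale; ring.
Qed.

Lemma form_zerol (z : vec n) : B (@vzero n) z = 0.
Proof. rewrite /form; apply: big1 => i _; rewrite /vzero; ring. Qed.

Lemma form_nondeg (x : vec n) : (forall y, B x y = 0) -> x = @vzero n.
Proof.
move=> H; apply: functional_extensionality => i.
pose e : vec n := fun j => if j == i then R1 else R0.
have := H e; rewrite /form (bigD1 i) //= big1.
  rewrite /e eqxx /sgn /vzero; case: ifP => _ HH; rewrite ?Rmult_1_r ?Rmult_1_l ?Rplus_0_r in HH; [exact HH|]; rewrite -Ropp_mult_distr_l Rmult_1_l in HH; apply Ropp_eq_0_compat in HH; rewrite Ropp_involutive in HH; exact HH.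
move=> j Hj; rewrite /e (negbTE Hj); ring.
Qed.

Lemma le_sum (f : 'I_n -> R) i : (forall j, 0 <= f j) -> f i <= \big[Rplus/R0]_(j < n) f j.
Proof.
move=> H; rewrite (bigD1 i) //=.
have : 0 <= \big[Rplus/R0]_(j < n | j != i) f j.
  apply: (big_ind (fun u => 0 <= u)) => //; [lra| move=> ? ? ? ?; lra].
move=> HS; rewrite -{1}(Rplus_0_r (f i)); apply: Rplus_le_compat_l; exact HS.
Qed.


Lemma form_addr (x y z : vec n) : B z (vadd x y) = B z x + B z y.
Proof. by rewrite form_sym form_addl !(form_sym z). Qed.
Lemma form_scaler a (x z : vec n) : B z (vscale a x) = a * B z x.
Proof. by rewrite form_sym form_scalel (form_sym z). Qed.
Lemma form_oppl (x z : vec n) : B (vopp x) z = - B x z.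
Proof.
have -> : vopp x = vscale (-1) x by veq.
rewrite form_scalel; ring.
Qed.
Lemma form_oppr (x z : vec n) : B z (vopp x) = - B z x.
Proof. by rewrite form_sym form_oppl (form_sym z). Qed.

Section Lin.
Variable L : vec n -> vec n.
Hypothesis HL : is_linear L.
Lemma lin_add x y : L (vadd x y) = vadd (L x) (L y). Proof. exact: HL.1. Qed.
Lemma lin_scale a x : L (vscale a x) = vscale a (L x). Proof. exact: HL.2. Qed.
Lemma lin_zero : L (@vzero n) = @vzero n.
Proof.
have -> : @vzero n = vscale 0 (@vzero n) by veq.
rewrite lin_scale; veq.
Qed.
Lemma lin_opp x : L (vopp x) = vopp (L x).
Proof.
have -> : vopp x = vscale (-1) x by veq.
rewrite lin_scale; veq.
Qed.
End Lin.

Variable G : aff n -> Prop.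
Hypothesis HG : is_subgroup_Iso G.

Lemma G_iso g : G g -> is_iso g. Proof. exact: HG.1. Qed.
Lemma G_lin g : G g -> is_linear g.1. Proof. by move/G_iso=> []. Qed.

Lemma Ap_spec : {f : aff n -> vec n -> vec n | f = @Apart n}.
Proof. by exists (@Apart n). Qed.
Definition Ap := proj1_sig Ap_spec.
Lemma Ap_eq : Ap = @Apart n. Proof. exact: proj2_sig Ap_spec. Qed.
Notation A := Ap.

Lemma L_eq g x : g.1 x = vadd x (A g x).
Proof. rewrite Ap_eq /Apart; veq. Qed.

Section OneG.
Variable g : aff n.
Hypothesis Hg : G g.
Lemma A_add x y : A g (vadd x y) = vadd (A g x) (A g y).
Proof. rewrite Ap_eq /Apart (lin_add (G_lin Hg)); veq. Qed.
Lemma A_scale a x : A g (vscale a x) = vscale a (A g x).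
Proof. rewrite Ap_eq /Apart (lin_scale (G_lin Hg)); veq. Qed.
Lemma A_opp x : A g (vopp x) = vopp (A g x).
Proof. rewrite Ap_eq /Apart (lin_opp (G_lin Hg)); veq. Qed.
Lemma A_zero : A g (@vzero n) = @vzero n.
Proof. rewrite Ap_eq /Apart (lin_zero (G_lin Hg)); veq. Qed.
End OneG.


Definition D (g : aff n) y := vadd (A g y) g.2.

Lemma comp_eq (a b c d : aff n) : aff_comp a b = aff_comp c d ->
  (forall x, a.1 (b.1 x) = c.1 (d.1 x)) /\ vadd (a.1 b.2) a.2 = vadd (c.1 d.2) c.2.
Proof. move=> E; split; [move=> x; exact: (equal_f (f_equal fst E) x) | exact: (f_equal snd E)]. Qed.

Lemma D_cent c g : centralizer G c -> G g -> forall x0, D g (aff_app c x0) = c.1 (D g x0).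
Proof.
move=> Hc Hg x0; have [E1 E2] := comp_eq (Hc.2 g Hg).
have Lc := Hc.1.1; have Lg := G_lin Hg.
rewrite /D Ap_eq /Apart /aff_app (lin_add Lg) !(lin_add Lc) (lin_opp Lc) E1.
apply: functional_extensionality => i; have := equal_f E2 i; rewrite /vadd /vopp; lra.
Qed.

Lemma orb_inv c g h x0 : centralizer G c -> G g -> G h ->
  B (D g (aff_app c x0)) (D h (aff_app c x0)) = B (D g x0) (D h x0).
Proof. move=> Hc Hg Hh; rewrite !(D_cent Hc) //; exact: Hc.1.2. Qed.

Lemma expand (a b p q : vec n) t : B (vadd a (vscale t p)) (vadd b (vscale t q)) =
  B a b + t * (B p b + B a q) + t * t * B p q.
Proof. rewrite !form_addl !form_addr !form_scalel !form_scaler; ring. Qed.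

Lemma form_add4 (a b c d : vec n) : B (vadd a b) (vadd c d) = B a c + B a d + B b c + B b d.
Proof. rewrite !form_addl !form_addr; ring. Qed.

Lemma vadd_zero_opp (X Y : vec n) : vadd X Y = @vzero n -> X = vopp Y.
Proof. move=> E; apply: functional_extensionality => i; have := equal_f E i; rewrite /vadd /vopp /vzero; lra. Qed.

Section Key.
Variables (x0 : vec n) (eps : R).
Hypothesis Heps : 0 < eps.
Hypothesis Hball : forall y : vec n, (forall i, Rabs (y i - x0 i) < eps) -> Defs.orbit (centralizer G) x0 y.

Lemma D_shift g t z : G g -> D g (vadd x0 (vscale t z)) = vadd (D g x0) (vscale t (A g z)).
Proof. move=> Hg; rewrite /D (A_add Hg) (A_scale Hg); veq. Qed.

Lemma key g h z : G g -> G h ->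
  B (A g z) (A h z) = 0 /\ B (A g z) (D h x0) + B (D g x0) (A h z) = 0.
Proof.
move=> Hg Hh.
set S := \big[Rplus/R0]_(j < n) Rabs (z j).
have S0 : 0 <= S.
  apply: (big_ind (fun u => 0 <= u)) => //; [lra| move=> ? ? ? ?; lra| move=> *; exact: Rabs_pos].
set M := S + 1.
have HM : forall j, Rabs (z j) < M.
  move=> j; have := @le_sum (fun j => Rabs (z j)) j (fun j => Rabs_pos (z j)).
  rewrite /M /S; lra.
have Mpos : 0 < M by rewrite /M; lra.
set t := eps / (2 * M).
have Ht : 0 < t by rewrite /t; apply: Rdiv_lt_0_compat; lra.
have ev : forall tau, 0 < tau <= 2 * t ->
   B (D g (vadd x0 (vscale tau z))) (D h (vadd x0 (vscale tau z))) = B (D g x0) (D h x0).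
  move=> tau Htau.
  have [c [Hc Hcx]] : Defs.orbit (centralizer G) x0 (vadd x0 (vscale tau z)).
    apply: Hball => i; rewrite /vadd /vscale.
    have -> : x0 i + tau * z i - x0 i = tau * z i by ring.
    rewrite Rabs_mult (Rabs_right tau); last lra.
    have := HM i; have := Rabs_pos (z i) => ? ?.
    have E : 2 * t * M = eps by rewrite /t; field; lra.
    nra.
  rewrite -Hcx; exact: orb_inv.
have e1 := ev t ltac:(lra).
have e2 := ev (2 * t) ltac:(lra).
rewrite !(D_shift _ _ Hg) !(D_shift _ _ Hh) in e1 e2.
rewrite !expand in e1 e2.
set be := B (A g z) (D h x0) + B (D g x0) (A h z).
set ga := B (A g z) (A h z).
have h1 : be + t * ga = 0.
  apply: (Rmult_eq_reg_l t); last lra. rewrite /be /ga; nra.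
have h2 : be + 2 * t * ga = 0.
  apply: (Rmult_eq_reg_l (2 * t)); last lra. rewrite /be /ga; nra.
have hg : ga = 0.
  apply: (Rmult_eq_reg_l t); last lra. nra.
split; [exact hg| rewrite /be; nra].
Qed.

Lemma F1 g h u w : G g -> G h -> B (A g u) (A h w) + B (A g w) (A h u) = 0.
Proof.
move=> Hg Hh.
have k1 := (key (vadd u w) Hg Hh).1. rewrite (A_add Hg) (A_add Hh) form_add4 in k1.
have k2 := (key u Hg Hh).1; have k3 := (key w Hg Hh).1. lra.
Qed.

Lemma Fiso g u w : G g -> B (A g u) (A g w) = 0.
Proof. move=> Hg; have := F1 u w Hg Hg; rewrite (form_sym (A g w)); lra. Qed.

Lemma Fskew g u w : G g -> B (A g u) w = - B u (A g w).
Proof.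
move=> Hg; have iso := (G_iso Hg).2 u w. rewrite !L_eq form_add4 in iso.
have := Fiso u w Hg; lra.
Qed.

Lemma F3 g u : G g -> A g (A g u) = @vzero n.
Proof. move=> Hg; apply: form_nondeg => w; rewrite (Fskew _ _ Hg) (Fiso _ _ Hg); ring. Qed.

Lemma F5 g h u : G g -> G h -> A g (A h u) = vopp (A h (A g u)).
Proof.
move=> Hg Hh; apply: vadd_zero_opp; apply: form_nondeg => w.
rewrite form_addl (Fskew (A h u) w Hg) (Fskew (A g u) w Hh) (form_sym (A h u)).
have := F1 u w Hg Hh; lra.
Qed.

Lemma F6 g h : G g -> G h -> A g h.2 = vopp (A h g.2).
Proof.
move=> Hg Hh; apply: vadd_zero_opp; apply: form_nondeg => z.
rewrite form_addl (Fskew h.2 z Hg) (Fskew g.2 z Hh).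
have k := (key z Hg Hh).2. rewrite /D form_addr (form_addl (A g x0)) in k.
have := F1 z x0 Hg Hh. rewrite (form_sym h.2). lra.
Qed.

Lemma F7 g : G g -> A g g.2 = @vzero n.
Proof.
move=> Hg; have E := F6 Hg Hg; apply: functional_extensionality => i.
have := equal_f E i; rewrite /vopp /vzero; lra.
Qed.

Lemma inv_form g g' : G g -> aff_comp g g' = @aff_id n ->
  g' = ((fun x => vadd x (vopp (A g x))), vopp g.2).
Proof.
move=> Hg E.
have E1 : forall x, vadd (g'.1 x) (A g (g'.1 x)) = x.
  move=> x; rewrite -L_eq; exact: (equal_f (f_equal fst E) x).
have E2 : vadd (vadd g'.2 (A g g'.2)) g.2 = @vzero n.
  rewrite -L_eq; exact: (f_equal snd E).
apply: injective_projections => /=.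
  apply: functional_extensionality => x.
  have H2 : A g (g'.1 x) = A g x.
    rewrite -{2}(E1 x) (A_add Hg) (F3 _ Hg); veq.
  apply: functional_extensionality => i; have := equal_f (E1 x) i; have := equal_f H2 i.
  rewrite /vadd /vopp; lra.
have H2 : A g g'.2 = @vzero n.
  have := f_equal (A g) E2; rewrite !(A_add Hg) (F3 _ Hg) (F7 Hg) (A_zero Hg) => H.
  apply: functional_extensionality => i; have := equal_f H i; rewrite /vadd /vzero; lra.
apply: functional_extensionality => i; have := equal_f E2 i; have := equal_f H2 i.
rewrite /vadd /vopp /vzero; lra.
Qed.

Ltac normA Hg Hh :=
  do 8 rewrite ?(A_add Hg) ?(A_add Hh) ?(A_opp Hg) ?(A_opp Hh) ?(A_scale Hg) ?(A_scale Hh)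
    ?(A_zero Hg) ?(A_zero Hh) ?(F3 _ Hg) ?(F3 _ Hh) ?(F5 _ Hh Hg) ?(F7 Hg) ?(F7 Hh) ?(F6 Hh Hg).

Lemma comm_form g h g' h' : G g -> G h -> aff_comp g g' = @aff_id n -> aff_comp h h' = @aff_id n ->
  aff_comp g (aff_comp h (aff_comp g' h')) =
  ((fun x => vadd x (vscale 2 (A g (A h x)))), vscale 2 (A g h.2)).
Proof.
move=> Hg Hh E E'; rewrite (inv_form Hg E) (inv_form Hh E') /aff_comp /=.
apply: injective_projections => /=.
  apply: functional_extensionality => x; rewrite !L_eq; normA Hg Hh; veq.
rewrite !L_eq; normA Hg Hh; veq.
Qed.

Lemma comm_central g h m : G g -> G h -> G m ->
  aff_comp ((fun x => vadd x (vscale 2 (A g (A h x)))), vscale 2 (A g h.2)) m =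
  aff_comp m ((fun x => vadd x (vscale 2 (A g (A h x)))), vscale 2 (A g h.2)).
Proof.
move=> Hg Hh Hm; rewrite /aff_comp /=; apply: injective_projections => /=.
  apply: functional_extensionality => x; rewrite !L_eq.
  do 8 rewrite ?(A_add Hg) ?(A_add Hh) ?(A_add Hm) ?(A_opp Hg) ?(A_opp Hh) ?(A_opp Hm)
    ?(A_scale Hg) ?(A_scale Hh) ?(A_scale Hm) ?(A_zero Hg) ?(A_zero Hh) ?(A_zero Hm)
    ?(F5 _ Hh Hg) ?(F5 _ Hm Hg) ?(F5 _ Hm Hh).
  veq.
rewrite !L_eq.
do 8 rewrite ?(A_add Hg) ?(A_add Hh) ?(A_add Hm) ?(A_opp Hg) ?(A_opp Hh) ?(A_opp Hm)
    ?(A_scale Hg) ?(A_scale Hh) ?(A_scale Hm) ?(A_zero Hg) ?(A_zero Hh) ?(A_zero Hm)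
    ?(F5 _ Hh Hg) ?(F5 _ Hm Hg) ?(F5 _ Hm Hh) ?(F6 Hm Hh).
veq.
Qed.
End Key.

Lemma A_pair (p : aff n) z : A p z = vadd (p.1 z) (vopp z).
Proof. by rewrite Ap_eq. Qed.

End F.

Theorem lemma4p2 (r s : nat) (G : aff (r + s) -> Prop) :
  is_subgroup_Iso G ->
  has_open_orbit (centralizer G) ->
  forall g : aff (r + s), G g ->
  forall x : vec (r + s), perp (U_of (center G)) x ->
  U0 G (Apart g x).
Proof.
move=> HG [x0 Hop] g Hg x Hx.
have Hx0 : Defs.orbit (centralizer G) x0 x0.
  exists (@aff_id (r + s)); split; last by rewrite /aff_app /aff_id; veq.
  split.
    split; [split; move=> *; veq | by []].
  move=> h Hh; rewrite /aff_comp /=; apply: injective_projections => //=.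
  rewrite (lin_zero (G_lin HG Hh)); veq.
have [eps [Heps Hball]] := Hop x0 Hx0.
split.
  exists [:: (g, x)]; split; first by move=> p [<-|[]].
  apply: functional_extensionality => i; rewrite /vadd /vzero /=; ring.
move=> u [l [Hl ->]]; rewrite -Ap_eq.
elim: l Hl => [|[h y] l IH] Hl /=; first exact: form_zerol.
rewrite form_addl IH; last by move=> p Hp; apply: Hl; right.
have Hh : G h by apply: (Hl (h, y)); left.
rewrite form_sym (Fskew HG Heps Hball _ _ Hg).
have [g' [Hg' [Eg _]]] := HG.2.2.2 g Hg.
have [h' [Hh' [Eh _]]] := HG.2.2.2 h Hh.
set k := aff_comp g (aff_comp h (aff_comp g' h')).
have Gk : G k.
  apply: HG.2.2.1 => //; apply: HG.2.2.1 => //; exact: HG.2.2.1.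
have Ek := comm_form HG Heps Hball Hg Hh Eg Eh.
have Ck : center G k.
  split => // m Hm; rewrite /k Ek; exact (comm_central HG Heps Hball Hg Hh Hm).
have -> : form x (Ap g (Ap h y)) = form (Ap g (Ap h y)) x by rewrite form_sym.
rewrite (Hx (Ap g (Ap h y))); first ring.
exists [:: (k, vscale (/2) y)]; split; first by move=> p [<-|[]].
rewrite /= -Ap_eq (A_pair k) /k Ek /= (A_scale HG Hh) (A_scale HG Hg).
apply: functional_extensionality => i; rewrite /vadd /vopp /vscale /vzero /=; field.
Qed.
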